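(* Let $\Gamma$ be a weighted digraph with vertex set $V=\{1,\dots,n\}$ and arc set $E$, out-forest dimension $d$ and normalized matrix of maximum out-forests $\bar J$. Let $K$ be the vertex set of a basis bicomponent of $\Gamma$; let $K^+$ be the set of vertices reachable by directed paths from $K$ and unreachable from all other basis bicomponents; let $\widetilde K$ be the union of the vertex sets of all basis bicomponents. Let $\mathsf T$ be the set of spanning diverging trees of the restriction $\Gamma_K$ of $\Gamma$ to $K$, and $\mathsf T^j\subseteq\mathsf T$ those diverging from (rooted at) $j$. Let $\Gamma_{-K}$ be the spanning subgraph of $\Gamma$ with arc set $E\setminus E(\Gamma_K)$, and $\mathsf P^{K\to i}$ the set of maximum out-forests of $\Gamma_{-K}$ in which $i$ is reachable from some vertex of $K$. Let $\varepsilon(\cdot)$ denote the weight of a set of subgraphs (sum of weights of its elements) and $\sigma_{n-d}$ the total weight of the maximum out-forests of $\Gamma$. Then: (1) $\bar J$ is row stochastic: $\bar J_{ij}\ge0$ for all $i,j$ and $\sum_{k=1}^n\bar J_{ik}=1$ for all $i$; (2) $\bar J_{ij}\ne0$ if and only if $j\in\widetilde K$ and $i$ is reachable from $j$ in $\Gamma$; (3) if $j\in K$, then for every $i\in V$, $\bar J_{ij}=\varepsilon(\mathsf T^j)\,\varepsilon(\mathsf P^{K\to i})/\sigma_{n-d}$; moreover, if $i\in K^+$ then $\bar J_{ij}=\bar J_{jj}=\varepsilon(\mathsf T^j)/\varepsilon(\mathsf T)$; (4) $\sum_{j\in K}\bar J_{jj}=1$; in particular, if $j$ is an undominated vertex then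 $\bar J_{jj}=1$; (5) if $j_1,j_2\in K$, then the columns satisfy $\bar J_{\cdot j_2}=\big(\varepsilon(\mathsf T^{j_2})/\varepsilon(\mathsf T^{j_1})\big)\bar J_{\cdot j_1}$.
   Context: A weighted digraph $\Gamma$ has no loops and each arc $j\to i$ ($j\ne i$) has a positive weight. A diverging tree is a rooted directed tree with directed paths from its root to all its other vertices; an out-forest of a digraph is a spanning subgraph whose weak components are diverging trees; a maximum out-forest is one with the maximum number of arcs; the out-forest dimension $d$ is the number of trees in a maximum out-forest. The weight of a subgraph is the product of its arc weights (the empty product is $1$). The normalized matrix of maximum out-forests $\bar J$ has $\bar J_{ij}$ equal to the total weight of the maximum out-forests of $\Gamma$ in which $i$ belongs to the tree rooted at $j$, divided by the total weight of all maximum out-forests. A basis bicomponent is a strong component into which no arc enters from outside it; an undominated vertex is a vertex forming by itself a basis bicomponent. Every vertex is reachable from itself. *)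

(* Defs.v *)
From HB Require Import structures.
From mathcomp Require Import all_boot all_order all_algebra.
Set Implicit Arguments. Unset Strict Implicit. Unset Printing Implicit Defensive.
Import Order.TTheory GRing.Theory Num.Theory.
Local Open Scope ring_scope.

(* Vertices are 'I_n.  A (sub)digraph is given by its arc set, a set of
   ordered pairs; the pair (j, i) is the arc j -> i. *)
Section Defs.
Variable n : nat.
Local Notation V := 'I_n.
Local Notation arcs := {set V * V}.

Definition arel (F : arcs) : rel V := fun x y => (x, y) \in F.

Definition reach (F : arcs) (x y : V) : bool := connect (arel F) x y.

Definition wcomp (F : arcs) (x : V) : {set V} :=
  [set y | connect (fun a b => arel F a b || arel F b a) x y].

Definition restrict (F : arcs) (S : {set V}) : arcs :=
  [set a in F | (a.1 \in S) && (a.2 \in S)].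

Definition diverging_tree (S : {set V}) (F : arcs) (r : V) : bool :=
  [&& F \subset setX S S, (#|F|).+1 == #|S|, r \in S &
      [forall y in S, reach F r y]].

Definition out_forest (E F : arcs) : bool :=
  (F \subset E) &&
  [forall x, [exists r, diverging_tree (wcomp F x) (restrict F (wcomp F x)) r]].

Definition max_out_forest (E F : arcs) : bool :=
  out_forest E F && [forall G : arcs, out_forest E G ==> (#|G| <= #|F|)%N].

Definition in_tree_rooted (F : arcs) (i j : V) : bool :=
  (j \in wcomp F i) && [forall y in wcomp F i, reach F j y].

Variable R : realFieldType.

Definition wt (w : V -> V -> R) (F : arcs) : R := \prod_(a in F) w a.1 a.2.

Definition sigma_max (E : arcs) (w : V -> V -> R) : R :=
  \sum_(F : arcs | max_out_forest E F) wt w F.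

Definition Jbar (E : arcs) (w : V -> V -> R) (i j : V) : R :=
  (\sum_(F : arcs | max_out_forest E F && in_tree_rooted F i j) wt w F)
  / sigma_max E w.

Definition scomp (E : arcs) (v : V) : {set V} :=
  [set u | reach E u v && reach E v u].

Definition basis_bicomp (E : arcs) (K : {set V}) : bool :=
  [exists v, K == scomp E v] && [forall a in E, (a.2 \in K) ==> (a.1 \in K)].

Definition undominated (E : arcs) (j : V) : bool := basis_bicomp E [set j].

Definition Ktilde (E : arcs) : {set V} :=
  \bigcup_(K : {set V} | basis_bicomp E K) K.

Definition Kplus (E : arcs) (K : {set V}) : {set V} :=
  [set i | [exists k in K, reach E k i] &&
     [forall K' : {set V}, (basis_bicomp E K' && (K' != K)) ==>
        [forall k in K', ~~ reach E k i]]].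

Definition epsT (E : arcs) (w : V -> V -> R) (K : {set V}) : R :=
  \sum_(F : arcs | (F \subset E) && [exists r, diverging_tree K F r]) wt w F.

Definition epsTj (E : arcs) (w : V -> V -> R) (K : {set V}) (j : V) : R :=
  \sum_(F : arcs | (F \subset E) && diverging_tree K F j) wt w F.

Definition minusK (E : arcs) (K : {set V}) : arcs := E :\: restrict E K.

Definition epsP (E : arcs) (w : V -> V -> R) (K : {set V}) (i : V) : R :=
  \sum_(F : arcs | max_out_forest (minusK E K) F && [exists k in K, reach F k i])
     wt w F.

End Defs.

(* Main.v *)
Require Import Defs.
From HB Require Import structures.
From mathcomp Require Import all_boot all_order all_algebra.
Set Implicit Arguments. Unset Strict Implicit. Unset Printing Implicit Defensive.
Import Order.TTheory GRing.Theory Num.Theory.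

Local Close Scope ring_scope.
Section Gen.
Variable T : finType.
Implicit Types (e : rel T) (A : {set T}).

Lemma fwd_closed e A x y :
  (forall u v, u \in A -> e u v -> v \in A) -> x \in A -> connect e x y -> y \in A.
Proof.
move=> Hc Hx /connectP[p Hp ->]; elim: p x Hx Hp => //= z p IH x Hx /andP[exz Hp].
exact: IH (Hc _ _ Hx exz) Hp.
Qed.

Lemma bwd_closed e A x y :
  (forall u v, e u v -> v \in A -> u \in A) -> y \in A -> connect e x y -> x \in A.
Proof.
move=> Hc Hy /connectP[p Hp Ey]; subst y.
elim: p x Hp Hy => //= z p IH x /andP[exz Hp] Hl.
exact: Hc _ _ exz (IH _ Hp Hl).
Qed.

Lemma last_arc e x y : connect e x y -> x != y -> exists2 u, connect e x u & e u y.
Proof.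
move=> /connectP[p Hp ->]; case/lastP: p Hp => [|p z] /=; first by rewrite eqxx.
rewrite rcons_path last_rcons => /andP[Hp ez] _.
by exists (last x p) => //; apply/connectP; exists p.
Qed.

Lemma cross e A x y : connect e x y -> x \notin A -> y \in A ->
  exists u, exists v, [/\ u \notin A, v \in A & e u v].
Proof.
move=> /connectP[p Hp ->]; elim: p x Hp => /= [|z p IH] x; first by move=> _ /negPf ->.
case/andP=> exz Hp Hx Hl; case: (boolP (z \in A)) => Hz.
  by exists x, z.
exact: IH Hp Hz Hl.
Qed.

End Gen.

Section Forest.
Variable n : nat.
Local Notation V := ('I_n).
Local Notation arcs := {set V * V}.
Implicit Types (F G T P : arcs) (S : {set V}).

Definition heads F : {set V} := [set a.2 | a in F].
Definition roots F : {set V} := ~: heads F.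
Definition ID1 F := {in F &, injective (fun a : V * V => a.2)}.
Definition AC F := forall a, a \in F -> ~~ reach F a.2 a.1.

Lemma arelE F x y : arel F x y = ((x, y) \in F).
Proof. by []. Qed.

Lemma reach_refl F x : reach F x x.
Proof. exact: connect0. Qed.

Lemma reach_arc F x y : (x, y) \in F -> reach F x y.
Proof. by move=> H; apply: connect1. Qed.

Lemma reach_trans F x y z : reach F x y -> reach F y z -> reach F x z.
Proof. exact: connect_trans. Qed.

Lemma reach_sub F G x y : F \subset G -> reach F x y -> reach G x y.
Proof.
move=> sFG; apply: connect_sub => a b H; apply: connect1.
by rewrite /arel (subsetP sFG _ H).
Qed.

Lemma rootP F r u : r \in roots F -> (u, r) \in F = false.
Proof.
rewrite /roots in_setC => H; apply/negP => Hu; case/negP: H.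
by apply/imsetP; exists (u, r).
Qed.

Lemma notrootP F y : y \notin roots F -> exists u, (u, y) \in F.
Proof.
rewrite /roots in_setC negbK => /imsetP[[u v] Ha /= ->]; by exists u.
Qed.

Lemma root_reach F r x : r \in roots F -> reach F x r -> x = r.
Proof.
move=> Hr H; apply/eqP; apply/negP => /negP Hn.
by case: (last_arc H Hn) => u _; rewrite /arel rootP.
Qed.

Lemma headsP F y : reflect (exists u, (u, y) \in F) (y \in heads F).
Proof.
apply: (iffP imsetP) => [[[u v] Ha /= ->]|[u Hu]]; first by exists u.
by exists (u, y).
Qed.

Lemma tree_props S T r : diverging_tree S T r -> [/\ ID1 T, heads T = S :\ r & AC T].
Proof.
case/and4P=> sub /eqP Hc rS /forall_inP Hr.
have hS : heads T \subset S.
  apply/subsetP => y /headsP[u Hu]; have := subsetP sub _ Hu.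
  by rewrite in_setX => /andP[_ ->].
have hS2 : S :\ r \subset heads T.
  apply/subsetP => y; rewrite in_setD1 => /andP[ny yS].
  case: (last_arc (Hr y yS)); first by rewrite eq_sym.
  by move=> u _ uy; apply/headsP; exists u.
have rnh : r \notin heads T.
  apply/negP => rh.
  have sS : S \subset heads T.
    apply/subsetP => y yS; case: (eqVneq y r) => [->//|ny].
    by apply: (subsetP hS2); rewrite in_setD1 ny.
  have := leq_trans (subset_leq_card sS) (leq_imset_card _ _).
  by rewrite -Hc ltnn.
have EH : heads T = S :\ r.
  apply/eqP; rewrite eqEsubset hS2 andbT; apply/subsetP => y yh.
  rewrite in_setD1 (subsetP hS) // andbT; apply/eqP => yr.
  by rewrite -yr yh in rnh.
have I1 : ID1 T.
  apply/imset_injP; rewrite -/(heads T) EH.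
  by move: Hc; rewrite (cardsD1 r S) rS add1n => -[->].
split => // -[x y] aT /=; apply/negP => Hc2.
set C := [set v | reach T y v && reach T v y].
have Cpar : forall v, v \in C -> exists2 p, p \in C & (p, v) \in T.
  move=> v; rewrite inE => /andP[H1 H2]; case: (eqVneq y v) => [<-|nv].
    exists x => //; rewrite inE Hc2 /=; exact: reach_arc.
  case: (last_arc H1 nv) => p Hp pv; exists p => //.
  rewrite inE; apply/andP; split; first exact: Hp.
  exact: reach_trans (reach_arc pv) H2.
have rnC : r \notin C.
  apply/negP => /Cpar[p _ pr]; case/negP: rnh; apply/headsP; by exists p.
have yS : y \in S by have := subsetP sub _ aT; rewrite in_setX => /andP[].
have yC : y \in C by rewrite inE reach_refl.
have [u [v [uC vC uv]]] := cross (Hr _ yS) rnC yC.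
case: (Cpar v vC) => p pC pv.
have := I1 _ _ uv pv erefl; case=> up; by rewrite up pC in uC.
Qed.

Definition wsym F : rel V := fun a b => arel F a b || arel F b a.

Lemma wcomp_self F x : x \in wcomp F x.
Proof. by rewrite inE connect0. Qed.

Lemma wcomp_fwd F x u v : u \in wcomp F x -> (u, v) \in F -> v \in wcomp F x.
Proof.
rewrite !inE => H Huv; apply: connect_trans H (connect1 _).
by rewrite /arel Huv.
Qed.

Lemma wcomp_bwd F x u v : u \in wcomp F x -> (v, u) \in F -> v \in wcomp F x.
Proof.
rewrite !inE => H Huv; apply: connect_trans H (connect1 _).
by rewrite /arel Huv orbT.
Qed.

Lemma in_restrict F S a : (a \in restrict F S) = [&& a \in F, a.1 \in S & a.2 \in S].
Proof. by rewrite /restrict inE. Qed.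

Lemma reach_restrict F S x y :
  (forall u v, u \in S -> (u, v) \in F -> v \in S) -> x \in S ->
  reach F x y -> reach (restrict F S) x y.
Proof.
move=> Hc xS H.
suff : y \in [set z | (z \in S) && reach (restrict F S) x z] by rewrite inE => /andP[].
apply: (fwd_closed _ _ H); last by rewrite inE xS reach_refl.
move=> u v; rewrite !inE => /andP[uS Hu] Huv; have vS := Hc _ _ uS Huv.
rewrite vS; apply: reach_trans Hu (reach_arc _).
by rewrite in_restrict /= -[(u, v) \in F]/(arel F u v) Huv uS vS.
Qed.

Lemma root_exists F : AC F -> forall i, exists2 r, r \in roots F & reach F r i.
Proof.
move=> Hac i.
pose anc u := #|[set v | reach F v u]|.
case: (@arg_minnP _ i (fun u => reach F u i) anc (reach_refl F i)) => u Hu Hmin.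
exists u => //; case: (boolP (u \in roots F)) => [//|Hn]; case: (notrootP Hn) => p Hp.
exfalso.
have Hpi : reach F p i := reach_trans (reach_arc Hp) Hu.
have := Hmin p Hpi; rewrite leqNgt => /negP; apply; apply: proper_card.
apply/properP; split.
  apply/subsetP => v; rewrite !inE => H; exact: reach_trans H (reach_arc Hp).
exists u; first by rewrite inE reach_refl.
by rewrite inE; apply: (Hac _ Hp).
Qed.

Lemma root_uniq F r1 r2 i : ID1 F -> r1 \in roots F -> r2 \in roots F ->
  reach F r1 i -> reach F r2 i -> r1 = r2.
Proof.
move=> Hid H1 H2 R1 R2.
set A := [set v | reach F r1 v].
case: (boolP (r2 \in A)) => [|nA]; first by rewrite inE => /(root_reach H2).
have iA : i \in A by rewrite inE.
have [u [v [uA vA uv]]] := cross R2 nA iA.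
move: vA; rewrite inE => vA.
case: (eqVneq r1 v) => [ev|nv]; first by move: uv; rewrite /arel -ev rootP.
case: (last_arc vA nv) => u' Hu' u'v.
have := Hid _ _ uv u'v erefl; case=> eu; by rewrite inE eu /reach Hu' in uA.
Qed.

Lemma wcomp_root F r x : ID1 F -> r \in roots F -> reach F r x ->
  wcomp F x = [set y | reach F r y].
Proof.
move=> Hid Hr Hx; apply/setP => y; rewrite inE; apply/idP/idP => H.
  move: H; rewrite inE => H.
  have : y \in [set z | reach F r z]; last by rewrite inE.
  apply: (fwd_closed _ _ H); last by rewrite inE.
  move=> u v; rewrite !inE => Hu /orP[] Huv.
    exact: reach_trans Hu (reach_arc Huv).
  case: (eqVneq r u) => [eu|nu]; first by move: Huv; rewrite /arel -eu rootP.
  case: (last_arc Hu nu) => v' Hv' v'u.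
  by have := Hid _ _ Huv v'u erefl; case=> ->.
have Hs : connect (wsym F) x r.
  have Hsym : connect_sym (wsym F) by apply: sym_connect_sym => a b; rewrite /wsym orbC.
  rewrite Hsym.
  apply: (@connect_sub _ (arel F) (wsym F) _ r x Hx) => a b Hab.
  by apply: connect1; rewrite /wsym Hab.
apply: connect_trans Hs _.
move: H; rewrite inE => H.
apply: (@connect_sub _ (arel F) (wsym F) _ r y H) => a b Hab.
by apply: connect1; rewrite /wsym Hab.
Qed.

Lemma OF_char E F : out_forest E F <-> [/\ F \subset E, ID1 F & AC F].
Proof.
split.
  case/andP=> sFE /forallP Hall.
  have Hx : forall x, exists r, diverging_tree (wcomp F x) (restrict F (wcomp F x)) r.
    by move=> x; apply/existsP.
  have inR : forall a x, a \in F -> a.2 \in wcomp F x -> a \in restrict F (wcomp F x).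
    move=> [u v] x Ha /= Hv; rewrite in_restrict Ha Hv andbT /=.
    exact: wcomp_bwd Hv Ha.
  split => //.
    move=> a b Ha Hb /= Hab.
    case: (Hx a.2) => r /tree_props[I _ _].
    have Ha' := inR a a.2 Ha (wcomp_self _ _).
    have Hb' : b \in restrict F (wcomp F a.2) by apply: inR => //; rewrite -Hab wcomp_self.
    exact: I Ha' Hb' Hab.
  move=> a Ha; apply/negP => Hc.
  case: (Hx a.2) => r /tree_props[_ _ Hac].
  case/negP: (Hac a (inR a a.2 Ha (wcomp_self _ _))).
  apply: reach_restrict Hc; last exact: wcomp_self.
  move=> u v Hu Huv; exact: wcomp_fwd Hu Huv.
case=> sFE Hid Hac; apply/andP; split => //; apply/forallP => x; apply/existsP.
case: (root_exists Hac x) => r Hr Hrx.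
have EW := wcomp_root Hid Hr Hrx.
set S := wcomp F x.
have Sfwd : forall u v, u \in S -> (u, v) \in F -> v \in S.
  move=> u v; rewrite /S EW !inE => Hu Huv; exact: reach_trans Hu (reach_arc Huv).
have rS : r \in S by rewrite /S EW inE reach_refl.
exists r; apply/and4P; split => //.
- apply/subsetP => -[u v]; rewrite in_restrict in_setX => /and3P[_ -> ->] //.
- have EH : heads (restrict F S) = S :\ r.
    apply/setP => y; rewrite in_setD1; apply/headsP/idP.
      case=> u; rewrite in_restrict /= => /and3P[Hu _ yS]; rewrite yS andbT.
      by apply/eqP => yr; move: Hu; rewrite yr rootP.
    case/andP=> ny yS; move: (yS); rewrite /S EW inE => Hy.
    case: (last_arc Hy); first by rewrite eq_sym.
    move=> u Hu uy; exists u; rewrite arelE in uy; rewrite in_restrict uy /=.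
    by rewrite !inE; apply/andP; split.
  have : #|heads (restrict F S)| = #|restrict F S|.
    apply/eqP/imset_injP => a b Ha Hb; apply: Hid.
      by move: Ha; rewrite in_restrict => /andP[].
    by move: Hb; rewrite in_restrict => /andP[].
  by rewrite EH (cardsD1 r S) rS add1n => ->.
- apply/forall_inP => y yS; apply: reach_restrict => //.
  by move: yS; rewrite /S EW inE.
Qed.

Lemma itr_char E F i j : out_forest E F ->
  in_tree_rooted F i j = (j \in roots F) && reach F j i.
Proof.
case/OF_char=> _ Hid Hac.
case: (root_exists Hac i) => r Hr Hri.
have EW := wcomp_root Hid Hr Hri.
rewrite /in_tree_rooted EW inE; apply/idP/idP.
  case/andP=> Hrj /forall_inP Hall.
  have Hjr : reach F j r by apply: Hall; rewrite inE reach_refl.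
  have ej := root_reach Hr Hjr; subst j; by rewrite Hr Hri.
case/andP=> Hj Hji; have ej := root_uniq Hid Hr Hj Hri Hji; subst j.
rewrite reach_refl /=; apply/forall_inP => y; by rewrite inE.
Qed.

End Forest.

Section Span.
Variable n : nat.
Local Notation V := ('I_n).
Local Notation arcs := {set V * V}.
Variable E : arcs.
Implicit Types (F G H T P : arcs) (S X R : {set V}).

Definition GR F := forall r, r \in roots F -> forall v, reach E v r -> reach F r v.

Lemma card_roots F : ID1 F -> #|F| + #|roots F| = n.
Proof.
move=> Hid; have Hh : #|heads F| = #|F| by apply/eqP/imset_injP.
by rewrite -Hh /roots cardsC card_ord.
Qed.

Lemma inj_roots F H : out_forest E F -> GR F -> out_forest E H ->
  #|roots F| <= #|roots H|.
Proof.
case/OF_char=> sFE IF AF HG; case/OF_char=> sHE IH AH.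
pose phi r := odflt r [pick h in roots H | reach H h r].
have Hphi : forall r, phi r \in roots H /\ reach H (phi r) r.
  move=> r; rewrite /phi; case: pickP => [h /andP[]|] //= Hn.
  case: (root_exists AH r) => h Hh Hr; by have := Hn h; rewrite Hh Hr.
have Hinj : {in roots F &, injective phi}.
  move=> r1 r2 H1 H2 E12.
  have [_ R1] := Hphi r1; have [_ R2] := Hphi r2.
  rewrite E12 in R1.
  have F1 := HG r1 H1 _ (reach_sub sHE R1).
  have F2 := HG r2 H2 _ (reach_sub sHE R2).
  exact: root_uniq IF H1 H2 F1 F2.
rewrite -(card_in_imset Hinj); apply: subset_leq_card.
apply/subsetP => h /imsetP[r _ ->]; by case: (Hphi r).
Qed.

Record Inv R c X G := {
  i_sub : G \subset E;
  i_id : ID1 G;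
  i_ac : AC G;
  i_heads : heads G = X :\: R;
  i_RX : R \subset X;
  i_tails : forall a, a \in G -> a.1 \in X;
  i_reach : forall x, x \in X -> reach E c x -> reach G c x }.

Lemma step R c X G a b : Inv R c X G -> (a, b) \in E -> a \in X -> b \notin X ->
  (reach E c b -> reach G c a) -> Inv R c (b |: X) ((a, b) |: G).
Proof.
move=> [sGE IG AG HG RX TG RG] ab aX bX Hb.
have Gb : forall u, (b, u) \in G = false.
  by move=> u; apply/negP => /TG /= bX'; rewrite bX' in bX.
have hb : forall u, (u, b) \in G = false.
  move=> u; apply/negP => Hu; have : b \in heads G by apply/headsP; exists u.
  by rewrite HG in_setD (negPf bX) andbF.
have Rb : forall y, reach G b y -> y = b.
  move=> y H; have : y \in [set b]; last by rewrite inE => /eqP.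
  apply: (fwd_closed _ _ H); last by rewrite inE.
  by move=> u v; rewrite inE => /eqP -> ; rewrite arelE Gb.
have RG' : forall x y, reach ((a, b) |: G) x y -> y = b \/ reach G x y.
  move=> x y H; have : y \in [set z | (z == b) || reach G x z].
    apply: (fwd_closed _ _ H); last by rewrite inE reach_refl orbT.
    move=> u v; rewrite !inE arelE in_setU1 => /orP[/eqP ->|Hu] /orP[/eqP [_ ->]|Huv].
    - by rewrite eqxx.
    - by rewrite Gb in Huv.
    - by rewrite eqxx.
    - by rewrite (reach_trans Hu (reach_arc Huv)) orbT.
  by rewrite inE => /orP[/eqP|]; [left|right].
have anb : a != b by apply/eqP => eab; rewrite -eab aX in bX.
constructor.
- by rewrite subUset sub1set ab sGE.
- move=> e1 e2; rewrite !in_setU1 => /orP[/eqP->|H1] /orP[/eqP->|H2] //= E12.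
  + by move: H2; case: e2 E12 => u v /= <-; rewrite hb.
  + by move: H1; case: e1 E12 => u v /= ->; rewrite hb.
  + exact: IG.
- move=> e; rewrite in_setU1 => /orP[/eqP->|He] /=; apply/negP => /RG' [].
  + by move=> eab; rewrite eab eqxx in anb.
  + by move/Rb => eab; rewrite eab eqxx in anb.
  + by move=> e1b; have := TG _ He; rewrite e1b (negPf bX).
  + by apply/negP; apply: AG.
- apply/setP => y; rewrite in_setD in_setU1; apply/headsP/idP.
    case=> u; rewrite in_setU1 => /orP[/eqP[_ ->]|Hu].
      rewrite eqxx /= andbT; apply/negP => bR; by rewrite (subsetP RX _ bR) in bX.
    have : y \in heads G by apply/headsP; exists u.
    by rewrite HG in_setD => /andP[-> ->]; rewrite orbT.
  case/andP=> yR /orP[/eqP->|yX]; first by exists a; rewrite in_setU1 eqxx.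
  have : y \in heads G by rewrite HG in_setD yR yX.
  case/headsP=> u Hu; exists u; by rewrite in_setU1 Hu orbT.
- apply/subsetP => y yR; by rewrite in_setU1 (subsetP RX _ yR) orbT.
- move=> e; rewrite in_setU1 => /orP[/eqP->|He] /=; rewrite in_setU1.
    by rewrite aX orbT.
  by rewrite TG // orbT.
- move=> x; rewrite in_setU1 => /orP[/eqP->|xX] Hx.
    apply: reach_trans (reach_sub _ (Hb Hx)) (reach_arc _); first exact: subsetUr.
    by rewrite in_setU1 eqxx.
  apply: reach_sub (RG x xX Hx); exact: subsetUr.
Qed.

Lemma span R c : c \in R -> (forall i, exists2 r, r \in R & reach E r i) ->
  (forall r, r \in R -> reach E c r -> r = c) ->
  exists G, [/\ out_forest E G, roots G = R & forall i, reach E c i -> reach G c i].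
Proof.
move=> cR HR Hc.
suff : forall k X G, n - #|X| <= k -> Inv R c X G ->
  exists G, [/\ out_forest E G, roots G = R & forall i, reach E c i -> reach G c i].
  move=> Hsuff; apply: (Hsuff (n - #|R|) R set0); [exact: leqnn | constructor].
  - exact: sub0set.
  - by move=> a b; rewrite in_set0.
  - by move=> a; rewrite in_set0.
  - apply/setP => y; rewrite in_setD; apply/headsP/idP => [[u]|]; first by rewrite in_set0.
    by rewrite andNb.
  - exact: subxx.
  - by move=> a; rewrite in_set0.
  - by move=> x xR Hx; rewrite (Hc x xR Hx) reach_refl.
elim=> [|k IH] X G Hk Hinv.
all: case: (eqVneq X setT) => [EX|nX].
1,3: exists G; case: Hinv => sGE IG AG HG _ _ RG; split.
- by apply/OF_char.
- by rewrite /roots HG EX setTD setCK.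
- by move=> i Hi; apply: RG => //; rewrite EX inE.
- by apply/OF_char.
- by rewrite /roots HG EX setTD setCK.
- by move=> i Hi; apply: RG => //; rewrite EX inE.
- exfalso; have : #|X| < #|[set: V]|.
    by apply: proper_card; rewrite properT.
  by rewrite cardsT card_ord -subn_gt0 lt0n -leqn0 Hk.
have [v _ vX] : exists2 v, v \in [set: V] & v \notin X.
  by apply/subsetPn; apply: contra nX => Hs; rewrite eqEsubset subsetT Hs.
have : exists a, exists b, [/\ (a, b) \in E, a \in X, b \notin X &
   (reach E c b -> reach G c a)].
  case: (boolP [exists v, (v \notin X) && reach E c v]).
    case/existsP => v' /andP[v'X Hv'].
    set P := [set x | (x \in X) && reach G c x].
    have cP : c \notin ~: P.
      by rewrite in_setC negbK inE (subsetP (i_RX Hinv)) // reach_refl.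
    have v'P : v' \in ~: P by rewrite in_setC inE (negPf v'X).
    have [u [b [uP bP ub]]] := cross Hv' cP v'P.
    move: uP bP; rewrite !in_setC negbK !inE => /andP[uX Hu] Hb.
    exists u, b; split => //.
    apply/negP => bX; case/negP: Hb; rewrite bX /=.
    apply: (i_reach Hinv) => //.
    exact: reach_trans (reach_sub (i_sub Hinv) Hu) (reach_arc ub).
  move=> /existsPn Hno; case: (HR v) => r rR Hr.
  have rX : r \notin ~: X by rewrite in_setC negbK (subsetP (i_RX Hinv)).
  have vX' : v \in ~: X by rewrite in_setC.
  have [u [b [uX bX ub]]] := cross Hr rX vX'.
  move: uX bX; rewrite !in_setC negbK => uX bX.
  exists u, b; split => // Hb; by have := Hno b; rewrite bX Hb.
case=> a [b [ab aX bX Hb]].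
apply: (IH (b |: X) ((a, b) |: G)); last exact: step.
rewrite cardsU1 bX add1n subnS; move: Hk; case: (n - #|X|) => //.
Qed.

End Span.

Section MOF.
Variable n : nat.
Local Notation V := ('I_n).
Local Notation arcs := {set V * V}.
Variable E : arcs.
Implicit Types (F G H T P : arcs) (S X R : {set V}).

Definition srcb v := [forall u, reach E u v ==> reach E v u].

Lemma srcP v : reflect (forall u, reach E u v -> reach E v u) (srcb v).
Proof.
apply: (iffP forallP) => H u; first exact: (implyP (H u)).
by apply/implyP; apply: H.
Qed.

Definition fc (c u : V) : nat := if u == c then 0 else (val u).+1.

Lemma fc_inj c : injective (fc c).
Proof.
move=> u v; rewrite /fc; case: (eqVneq u c) => [->|nu]; case: (eqVneq v c) => [->|nv] //.
by case=> /val_inj.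
Qed.

Definition Rc c := [set v | srcb v && [forall u, reach E u v ==> (fc c v <= fc c u)]].

Lemma RcP c v : v \in Rc c ->
  srcb v /\ forall u, reach E u v -> fc c v <= fc c u.
Proof.
by rewrite inE => /andP[-> /forallP H]; split => // u; apply/implyP.
Qed.

Lemma source_exists i : exists2 u, srcb u & reach E u i.
Proof.
pose anc u := #|[set v | reach E v u]|.
case: (@arg_minnP _ i (fun u => reach E u i) anc (reach_refl E i)) => u Hu Hmin.
exists u => //; apply/srcP => a Ha; apply/negPn/negP => Hn.
have := Hmin a (reach_trans Ha Hu); rewrite leqNgt => /negP; apply; apply: proper_card.
apply/properP; split.
  apply/subsetP => v; rewrite !inE => H; exact: reach_trans H Ha.
by exists u; rewrite inE ?reach_refl.
Qed.

Lemma Rc_props c : srcb c -> [/\ c \in Rc c,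
  (forall r, r \in Rc c -> reach E c r -> r = c) &
  (forall i, exists2 r, r \in Rc c & reach E r i)].
Proof.
move=> Hc; split.
- rewrite inE Hc /=; apply/forallP => u; apply/implyP => _; by rewrite /fc eqxx.
- move=> r /RcP[Hr Hmin] Hcr.
  have := Hmin c Hcr; rewrite {2}/fc eqxx leqn0 => /eqP H0.
  apply: (@fc_inj c); by rewrite H0 /fc eqxx.
move=> i; case: (source_exists i) => u Hu Hui.
pose m := [arg min_(x < u | reach E x u && reach E u x) fc c x].
have Hu0 : reach E u u && reach E u u by rewrite reach_refl.
case: (@arg_minnP _ u (fun x => reach E x u && reach E u x) (fc c) Hu0).
move=> x /andP[Hxu Hux] Hmin.
exists x; last exact: reach_trans Hxu Hui.
rewrite inE; apply/andP; split.
  apply/srcP => w Hw; apply: reach_trans Hxu ((srcP _ Hu) _ (reach_trans Hw Hxu)).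
apply/forallP => w; apply/implyP => Hw; apply: Hmin.
by rewrite (reach_trans Hw Hxu) /= ((srcP _ Hu) _ (reach_trans Hw Hxu)).
Qed.

Lemma Rc_GR c G : out_forest E G -> roots G = Rc c -> GR E G.
Proof.
case/OF_char=> sGE IG AG HR r Hr v Hv.
case: (root_exists AG v) => r' Hr' Hr'v.
have Hr'r : reach E r' r := reach_trans (reach_sub sGE Hr'v) Hv.
move: (Hr) (Hr'); rewrite HR => /RcP[Sr Mr] /RcP[_ Mr'].
have Hrr' : reach E r r' := (srcP _ Sr) _ Hr'r.
have := Mr _ Hr'r; have := Mr' _ Hrr' => H1 H2.
have := fc_inj (anti_leq (introT andP (conj H1 H2))) => e; by rewrite -e.
Qed.

Lemma G_exists c : srcb c -> exists G,
  [/\ out_forest E G, GR E G, c \in roots G & forall i, reach E c i -> reach G c i].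
Proof.
move=> Hc; case: (Rc_props Hc) => cR H1 H2.
case: (span cR H2 H1) => G [OG RG HG].
by exists G; split => //; [exact: Rc_GR OG RG | rewrite RG].
Qed.

Lemma MOF_char F : max_out_forest E F <-> out_forest E F /\ GR E F.
Proof.
split; last first.
  case=> OF GF; apply/andP; split => //; apply/forallP => G; apply/implyP => OG.
  have := inj_roots OF GF OG.
  case/OF_char: OF => _ IF _; case/OF_char: (OG) => _ IG _.
  have := card_roots IF; have := card_roots IG => e1 e2.
  move=> H; have E3 : #|G| + #|roots G| = #|F| + #|roots F| by rewrite e1 e2.
  by rewrite -(leq_add2r #|roots G|) E3 leq_add2l.
case/andP=> OF /forallP Hmax; split => //.
case/OF_char: (OF) => sFE IF AF.
move=> r Hr v Hv.
case: (source_exists r) => c Hc _.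
case: (G_exists Hc) => G0 [OG GG _ _].
case/OF_char: (OG) => sGE IG AG.
pose psi g := odflt g [pick h in roots F | reach F h g].
have Hpsi : forall g, psi g \in roots F /\ reach F (psi g) g.
  move=> g; rewrite /psi; case: pickP => [h /andP[]|] //= Hn.
  case: (root_exists AF g) => h Hh Hg; by have := Hn h; rewrite Hh Hg.
have Hinj : {in roots G0 &, injective psi}.
  move=> g1 g2 H1 H2 E12.
  have [_ R1] := Hpsi g1; have [_ R2] := Hpsi g2.
  rewrite E12 in R1.
  exact: root_uniq IG H1 H2 (GG _ H1 _ (reach_sub sFE R1)) (GG _ H2 _ (reach_sub sFE R2)).
have Hsub : psi @: roots G0 \subset roots F.
  apply/subsetP => h /imsetP[g _ ->]; by case: (Hpsi g).
have Hcard : #|roots F| <= #|psi @: roots G0|.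
  rewrite (card_in_imset Hinj).
  have := implyP (Hmax G0) OG.
  have := card_roots IF; have := card_roots IG => e1 e2 H.
  have E3 : #|G0| + #|roots G0| = #|F| + #|roots F| by rewrite e1 e2.
  by rewrite -(leq_add2l #|F|) -E3 leq_add2r.
have EQ : psi @: roots G0 = roots F.
  by apply/eqP; rewrite eqEcard Hsub Hcard.
move: (Hr); rewrite -EQ => /imsetP[g Hg Eg].
case: (root_exists AF v) => r' Hr' Hr'v.
move: (Hr'); rewrite -EQ => /imsetP[g' Hg' Eg'].
have [_ Rg] := Hpsi g; have [_ Rg'] := Hpsi g'.
rewrite -Eg in Rg; rewrite -Eg' in Rg'.
have Hvg : reach E v g := reach_trans Hv (reach_sub sFE Rg).
have Hgv : reach G0 g v := GG _ Hg _ Hvg.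
have Hgr' : reach E g r'.
  apply: (reach_sub sGE); apply: (GG _ Hg).
  exact: reach_trans (reach_sub sFE Hr'v) Hvg.
have Hgg' : reach G0 g' g := GG _ Hg' _ (reach_trans Hgr' (reach_sub sFE Rg')).
have egg := root_reach Hg Hgg'; subst g'.
by rewrite Eg -Eg'.
Qed.

End MOF.

Section Basis.
Variable n : nat.
Local Notation V := ('I_n).
Local Notation arcs := {set V * V}.
Variable E : arcs.
Implicit Types (F G H T P : arcs) (S X R : {set V}).

Lemma scompE v u : (u \in scomp E v) = reach E u v && reach E v u.
Proof. by rewrite inE. Qed.

Lemma src_basis r : srcb E r -> basis_bicomp E (scomp E r).
Proof.
move=> Hr; apply/andP; split; first by apply/existsP; exists r.
apply/forall_inP => -[u v] Ha /=; apply/implyP; rewrite !scompE => /andP[vr rv].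
have ur : reach E u r := reach_trans (reach_arc Ha) vr.
by rewrite ur ((srcP _ _ Hr) _ ur).
Qed.

Lemma src_Ktilde r : srcb E r -> r \in Ktilde E.
Proof.
move=> Hr; apply/bigcupP; exists (scomp E r); first exact: src_basis.
by rewrite scompE reach_refl.
Qed.

Lemma root_src F r : max_out_forest E F -> r \in roots F -> srcb E r.
Proof.
case/MOF_char=> /OF_char[sFE _ _] GF Hr; apply/srcP => u Hu.
exact: reach_sub sFE (GF r Hr u Hu).
Qed.

Variable K : {set V}.
Hypothesis HK : basis_bicomp E K.

Lemma KB k u : k \in K -> reach E u k -> u \in K.
Proof.
case/andP: HK => _ /forall_inP Hin kK H; apply: (bwd_closed _ _ H) => // a b ab bK.
by have := Hin (a, b) ab; rewrite /= bK.
Qed.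

Lemma K_reach k1 k2 : k1 \in K -> k2 \in K -> reach E k1 k2.
Proof.
case/andP: HK => /existsP[v /eqP EK] _; rewrite EK !scompE.
by case/andP=> H1 _ /andP[_ H2]; exact: reach_trans H1 H2.
Qed.

Lemma K_src k : k \in K -> srcb E k.
Proof. move=> kK; apply/srcP => u Hu; apply: K_reach => //; exact: KB Hu. Qed.

Lemma Ktilde_src j : j \in Ktilde E -> srcb E j.
Proof.
case/bigcupP=> K' HK' jK'; apply/srcP => u Hu.
case/andP: HK' => /existsP[v /eqP EK] /forall_inP Hin.
have uK : u \in K'.
  apply: (bwd_closed _ _ Hu) => // a b ab bK; by have := Hin (a, b) ab; rewrite /= bK.
move: jK' uK; rewrite EK !scompE => /andP[H1 _] /andP[_ H2]; exact: reach_trans H1 H2.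
Qed.

Local Notation E' := (minusK E K).

Lemma E'sub : E' \subset E.
Proof. exact: subsetDl. Qed.

Lemma E'head a : a \in E' -> a.2 \notin K.
Proof.
rewrite /minusK in_setD in_restrict => /andP[Hn Ha]; apply/negP => H2.
case/andP: HK => _ /forall_inP Hin; have H1 := implyP (Hin a Ha) H2.
by rewrite Ha H1 H2 in Hn.
Qed.

Lemma E'in a : a \in E -> a.2 \notin K -> a \in E'.
Proof. by move=> Ha H2; rewrite /minusK in_setD in_restrict Ha (negPf H2) !andbF. Qed.

Lemma reachK_into G x y : (forall a, a \in G -> a.2 \notin K) -> y \in K -> reach G x y -> x = y.
Proof.
move=> Hh yK H; apply/eqP; apply/negP => /negP nxy; case: (last_arc H nxy) => u _ uy.
by have := Hh _ uy; rewrite /= yK.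
Qed.

Lemma split_reach x r : r \notin K -> reach E x r ->
  reach E' x r \/ exists2 k, k \in K & reach E' k r.
Proof.
move=> rK H.
have : x \in [set z | reach E' z r || [exists k in K, reach E' k r]].
  apply: (bwd_closed _ _ H); last by rewrite inE reach_refl.
  move=> u v; rewrite arelE => uv; rewrite !inE => /orP[Hv|->]; last by rewrite orbT.
  case: (boolP ((u, v) \in E')) => Huv.
    by rewrite (reach_trans (reach_arc Huv) Hv).
  apply/orP; right; apply/exists_inP; exists v => //.
  move: Huv; rewrite /minusK in_setD in_restrict uv /= andbT negbK.
  by case/andP.
rewrite inE => /orP[|/exists_inP[k kK Hk]]; [left | right; exists k] => //.
Qed.

Lemma RF1 F P x y : (forall z w, (z, w) \in F -> z \notin K -> ((z, w) \in P) && (w \notin K)) ->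
  reach F x y -> x \notin K -> reach P x y.
Proof.
move=> Hc H xK.
have : y \in [set z | (z \notin K) && reach P x z].
  apply: (fwd_closed _ _ H); last by rewrite inE xK reach_refl.
  move=> u v; rewrite !inE => /andP[uK Hu] uv; case/andP: (Hc _ _ uv uK) => Puv ->.
  exact: reach_trans Hu (reach_arc Puv).
by rewrite inE => /andP[].
Qed.

Lemma RF2 F T x y : (forall u v, (u, v) \in F -> v \in K -> ((u, v) \in T) && (u \in K)) ->
  reach F x y -> y \in K -> reach T x y.
Proof.
move=> Hc H yK.
have : x \in [set z | (z \in K) && reach T z y].
  apply: (bwd_closed _ _ H); last by rewrite inE yK reach_refl.
  move=> u v uv; rewrite !inE => /andP[vK Hv]; case/andP: (Hc _ _ uv vK) => Tuv ->.
  exact: reach_trans (reach_arc Tuv) Hv.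
by rewrite inE => /andP[].
Qed.

Lemma reach_K_formula F P j i : P \subset F -> (forall a, a \in F -> a.2 \notin K -> a \in P) ->
  j \in K -> (forall k, k \in K -> reach F j k) ->
  reach F j i = [exists k in K, reach P k i].
Proof.
move=> sPF Hc jK Hj; apply/idP/exists_inP.
  move=> H.
  have : i \in [set y | (y \in K) || [exists k in K, reach P k y]].
    apply: (fwd_closed _ _ H); last by rewrite inE jK.
    move=> y z; rewrite !inE => Hy yz; case: (boolP (z \in K)) => // zK.
    have Pyz := Hc (y, z) yz zK.
    case/orP: Hy => [yK|/exists_inP[k kK Hk]]; apply/exists_inP.
      by exists y => //; exact: reach_arc.
    by exists k => //; exact: reach_trans Hk (reach_arc Pyz).
  rewrite inE => /orP[iK|/exists_inP[k kK Hk]]; first by exists i => //; exact: reach_refl.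
  by exists k.
case=> k kK Hk; exact: reach_trans (Hj k kK) (reach_sub sPF Hk).
Qed.

Section Dec.
Variable j : V.
Hypothesis jK : j \in K.

Lemma dec_fwd T P : T \subset E -> diverging_tree K T j -> max_out_forest E' P ->
  [/\ max_out_forest E (T :|: P), j \in roots (T :|: P),
      restrict (T :|: P) K = T, (T :|: P) :\: restrict (T :|: P) K = P &
      forall i, reach (T :|: P) j i = [exists k in K, reach P k i]].
Proof.
move=> sTE Hdt /MOF_char[/OF_char[sPE IP AP] GP].
have [IT HT AT] := tree_props Hdt.
case/and4P: (Hdt) => sTK _ _ /forall_inP Hsp.
have Tin : forall a, a \in T -> (a.1 \in K) && (a.2 \in K).
  by move=> a Ha; have := subsetP sTK a Ha; case: a Ha => u v _; rewrite in_setX.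
have Ph : forall a, a \in P -> a.2 \notin K by move=> a Ha; apply: E'head; exact: subsetP sPE a Ha.
set F := T :|: P.
have ER : restrict F K = T.
  apply/setP => -[u v]; rewrite in_restrict in_setU /=.
  case: (boolP ((u, v) \in T)) => [Ha|_] /=; first by have := Tin _ Ha; rewrite /= => ->.
  case: (boolP ((u, v) \in P)) => //= Ha; by rewrite (negPf (Ph _ Ha)) andbF.
have ED : F :\: restrict F K = P.
  rewrite ER; apply/setP => a; rewrite in_setD in_setU.
  case: (boolP (a \in T)) => //= Ha; apply/esym/negP => Pa.
  by have := Ph _ Pa; have := Tin _ Ha; case/andP=> _ ->.
have sFE : F \subset E by rewrite subUset sTE (subset_trans sPE E'sub).
have Hc1 : forall z w, (z, w) \in F -> z \notin K -> ((z, w) \in P) && (w \notin K).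
  move=> z w; rewrite in_setU => /orP[Ha|Ha] zK.
    by have := Tin _ Ha; rewrite /= (negPf zK).
  by rewrite Ha (Ph _ Ha).
have Hc2 : forall u v, (u, v) \in F -> v \in K -> ((u, v) \in T) && (u \in K).
  move=> u v; rewrite in_setU => /orP[Ha|Ha] vK.
    by have := Tin _ Ha; rewrite Ha /= => /andP[->].
  by have := Ph _ Ha; rewrite /= vK.
have IF : ID1 F.
  move=> a b; rewrite !in_setU => /orP[Ha|Ha] /orP[Hb|Hb] /= Eab.
  - exact: IT.
  - by have := Ph _ Hb; have := Tin _ Ha; rewrite Eab => /andP[_ ->].
  - by have := Ph _ Ha; have := Tin _ Hb; rewrite Eab => /andP[_ ->].
  - exact: IP.
have AF : AC F.
  move=> a; rewrite in_setU => /orP[Ha|Ha]; apply/negP => H.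
    have := Tin _ Ha => /andP[a1 _]; case/negP: (AT a Ha); exact: RF2 Hc2 H a1.
  case/negP: (AP a Ha); exact: RF1 Hc1 H (Ph _ Ha).
have jR : j \in roots F.
  rewrite /roots in_setC; apply/negP => /headsP[u]; rewrite in_setU => /orP[Ha|Ha].
    have : j \in heads T by apply/headsP; exists u.
    by rewrite HT in_setD1 eqxx.
  by have := Ph _ Ha; rewrite /= jK.
have rootsFP : forall r, r \in roots F -> r \in roots P.
  move=> r; rewrite /roots !in_setC; apply: contra => /headsP[u Hu].
  by apply/headsP; exists u; rewrite in_setU Hu orbT.
have GF : GR E F.
  move=> r Hr v Hv; case: (boolP (r \in K)) => rK.
    have erj : r = j.
      case: (eqVneq r j) => [//|nrj]; exfalso.
      have : r \in heads T by rewrite HT in_setD1 nrj rK.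
      move/headsP=> [u Hu]; by move: Hr; rewrite /roots in_setC => /headsP; apply; exists u; rewrite in_setU Hu.
    subst r; apply: reach_sub (Hsp v (KB jK Hv)); exact: subsetUl.
  case: (split_reach rK Hv) => [H|[k kK Hk]].
    apply: reach_sub (GP r (rootsFP r Hr) v H); exact: subsetUr.
  have := GP r (rootsFP r Hr) k Hk => H.
  have erk := reachK_into Ph kK H; by rewrite erk kK in rK.
split => //.
- by apply/MOF_char; split => //; apply/OF_char.
- move=> i; apply: reach_K_formula => //.
  + exact: subsetUr.
  + move=> a; rewrite in_setU => /orP[Ha|//] aK.
    by have := Tin _ Ha; rewrite (negPf aK) andbF.
  + move=> k kK; apply: reach_sub (Hsp k kK); exact: subsetUl.
Qed.

Lemma dec_bwd F : max_out_forest E F -> j \in roots F ->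
  [/\ (restrict F K \subset E) && diverging_tree K (restrict F K) j,
      max_out_forest E' (F :\: restrict F K) &
      forall i, reach F j i = [exists k in K, reach (F :\: restrict F K) k i]].
Proof.
case/MOF_char=> /OF_char[sFE IF AF] GF jR.
set T := restrict F K; set P := F :\: T.
have Fin : forall u v, (u, v) \in F -> v \in K -> u \in K.
  move=> u v Ha vK; case/andP: HK => _ /forall_inP Hin.
  by have := Hin (u, v) (subsetP sFE _ Ha); rewrite /= vK.
have sTF : T \subset F by apply/subsetP => a; rewrite in_restrict => /andP[].
have sPF : P \subset F by exact: subsetDl.
have Ph : forall a, a \in P -> a.2 \notin K.
  move=> [u v]; rewrite in_setD in_restrict /= => /andP[Hn Ha].
  apply/negP => vK; by rewrite Ha (Fin _ _ Ha vK) vK in Hn.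
have Hc2 : forall u v, (u, v) \in F -> v \in K -> ((u, v) \in T) && (u \in K).
  move=> u v Ha vK; have uK := Fin _ _ Ha vK; by rewrite in_restrict Ha uK vK.
have Hc1 : forall z w, (z, w) \in F -> z \notin K -> ((z, w) \in P) && (w \notin K).
  move=> z w Ha zK; have wK : w \notin K by apply: contra zK; exact: Fin _ _ Ha.
  by rewrite in_setD in_restrict Ha (negPf zK) wK.
have Hsp : forall k, k \in K -> reach T j k.
  move=> k kK; apply: (RF2 Hc2 _ kK); exact: (GF j jR k (K_reach kK jK)).
have Pin : forall a, a \in F -> a.2 \notin K -> a \in P.
  move=> [u v] Ha vK; by rewrite in_setD in_restrict Ha (negPf vK) !andbF.
split.
- rewrite (subset_trans sTF sFE) /=; apply/and4P; split => //.
  + by apply/subsetP => -[u v]; rewrite in_restrict in_setX => /and3P[_ -> ->].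
  + have EH : heads T = K :\ j.
      apply/setP => y; rewrite in_setD1; apply/headsP/idP.
        case=> u; rewrite in_restrict /= => /and3P[Ha _ ->]; rewrite andbT.
        apply/eqP => yj; by move: Ha; rewrite yj rootP.
      case/andP=> nyj yK; case: (last_arc (Hsp y yK)); first by rewrite eq_sym.
      by move=> u _ uy; exists u.
    have : #|heads T| = #|T|.
      apply/eqP/imset_injP => a b Ha Hb; apply: IF; [exact: subsetP sTF _ Ha | exact: subsetP sTF _ Hb].
    by rewrite EH (cardsD1 j K) jK add1n => ->.
  + by apply/forall_inP.
- apply/MOF_char; split.
    apply/OF_char; split.
    + apply/subsetP => a Ha; apply: E'in; first exact: subsetP sFE _ (subsetP sPF _ Ha).
      exact: Ph.
    + move=> a b Ha Hb; apply: IF; exact: subsetP sPF _ _.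
    + move=> a Ha; apply/negP => H; case/negP: (AF a (subsetP sPF _ Ha)).
      exact: reach_sub sPF H.
  move=> r Hr v Hv; case: (boolP (r \in K)) => rK.
    have evr := reachK_into E'head rK Hv; subst v; exact: reach_refl.
  have rF : r \in roots F.
    rewrite /roots in_setC; apply/negP => /headsP[u Hu].
    move: Hr; rewrite /roots in_setC => /negP; apply; apply/headsP; exists u.
    exact: Pin Hu rK.
  have := GF r rF v (reach_sub E'sub Hv) => H; exact: RF1 Hc1 H rK.
- move=> i; apply: reach_K_formula => // k kK; exact: reach_sub sTF (Hsp k kK).
Qed.

End Dec.
End Basis.

Local Open Scope ring_scope.

Section Sums.
Variable R : realFieldType.

Lemma sum_part (I J : finType) (P : pred I) (S : pred J) (Q : I -> J -> bool) (f : I -> R) :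
  (forall x, P x -> exists y0, forall y, (S y && Q x y) = (y == y0)) ->
  (forall x y, S y -> Q x y -> P x) ->
  \sum_(x | P x) f x = \sum_(y | S y) \sum_(x | Q x y) f x.
Proof.
move=> H1 H2; rewrite (exchange_big_dep P) /=; last by move=> y x; exact: H2.
apply: eq_bigr => x Px; case: (H1 x Px) => y0 Hy0.
by rewrite (big_pred1 y0) //= => y; rewrite /= Hy0.
Qed.

Lemma sum_gt0 (I : finType) (P : pred I) (f : I -> R) x0 :
  (forall x, P x -> 0 < f x) -> P x0 -> 0 < \sum_(x | P x) f x.
Proof.
move=> Hp P0; rewrite (bigD1 x0) //=; apply: ltr_wpDr; last exact: Hp.
by apply: sumr_ge0 => x /andP[Px _]; apply: ltW; exact: Hp.
Qed.

End Sums.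

Section Weights.
Variable R : realFieldType.
Variable n : nat.
Local Notation V := ('I_n).
Local Notation arcs := {set V * V}.
Variable E : arcs.
Variable w : V -> V -> R.
Hypothesis Hw : forall a, a \in E -> 0 < w a.1 a.2.
Implicit Types (F G H T P : arcs) (S X : {set V}).

Lemma wt_pos F : F \subset E -> 0 < wt w F.
Proof. move=> sFE; apply: prodr_gt0 => a Ha; apply: Hw; exact: subsetP sFE a Ha. Qed.

Lemma OF_set0 (E0 : arcs) : out_forest E0 (set0 : arcs).
Proof.
apply/OF_char; split; first exact: sub0set.
- by move=> a b; rewrite in_set0.
- by move=> a; rewrite in_set0.
Qed.

Lemma MOF_exists (E0 : arcs) : exists F, max_out_forest E0 F.
Proof.
case: (@arg_maxnP _ set0 (out_forest E0) (fun F => #|F|) (OF_set0 E0)) => F OF Hmax.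
exists F; apply/andP; split => //; apply/forallP => G; apply/implyP; exact: Hmax.
Qed.

Lemma sigma_pos (E0 : arcs) : E0 \subset E -> 0 < sigma_max E0 w.
Proof.
move=> sE; case: (MOF_exists E0) => F HF; apply: (sum_gt0 _ HF) => G.
case/andP=> /andP[sGE _] _; apply: wt_pos; exact: subset_trans sGE sE.
Qed.

Definition N i j := \sum_(F : arcs | max_out_forest E F && in_tree_rooted F i j) wt w F.

Lemma NE i j : N i j = \sum_(F : arcs | [&& max_out_forest E F, j \in roots F & reach F j i]) wt w F.
Proof.
apply: eq_bigl => F; case: (boolP (max_out_forest E F)) => //= HF.
by case/andP: HF => OF _; rewrite (itr_char _ _ OF).
Qed.

Lemma N_ge0 i j : 0 <= N i j.
Proof. by apply: sumr_ge0 => F /andP[/andP[/andP[sFE _] _] _]; apply: ltW; apply: wt_pos. Qed.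

Lemma JbarE i j : Jbar E w i j = N i j / sigma_max E w.
Proof. by []. Qed.

Lemma rowsum i : \sum_(k < n) N i k = sigma_max E w.
Proof.
rewrite /sigma_max (@sum_part _ _ _ _ predT (fun F k => max_out_forest E F && in_tree_rooted F i k)) //.
  move=> F HF; have OF : out_forest E F by case/andP: HF.
  case/OF_char: (OF) => _ IF AF.
  case: (root_exists AF i) => r Hr Hri; exists r => k /=.
  rewrite HF (itr_char _ _ OF) /=; apply/idP/eqP => [/andP[Hk Hki]|->]; last by rewrite Hr Hri.
  exact: root_uniq IF Hk Hr Hki Hri.
by move=> F k _ /andP[].
Qed.

Variable K : {set V}.
Hypothesis HK : basis_bicomp E K.
Local Notation E' := (minusK E K).

Lemma wtU T P : T \subset setX K K -> P \subset E' -> wt w (T :|: P) = wt w T * wt w P.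
Proof.
move=> sT sP; rewrite /wt -bigU /=.
  by apply: eq_bigl => a; rewrite in_setU.
apply/pred0P => a /=; apply/negP => /andP[Ta Pa].
have := E'head HK (subsetP sP a Pa); have := subsetP sT a Ta.
by case: a {Ta Pa} => u v; rewrite in_setX /= => /andP[_ ->].
Qed.

Lemma decomp j i : j \in K -> N i j = epsTj E w K j * epsP E w K i.
Proof.
move=> jK; rewrite NE /epsTj /epsP big_distrlr /= pair_big /=.
rewrite (reindex_onto (fun p : arcs * arcs => p.1 :|: p.2)
           (fun F => (restrict F K, F :\: restrict F K))) /=; last first.
  move=> F _; apply/setP => a; rewrite in_setU in_setD.
  by case: (boolP (a \in restrict F K)) => //=; rewrite in_restrict => /andP[->].
apply: eq_big => [[T P]|[T P]] /=.
  apply/idP/idP.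
    case/andP=> /and3P[HF jR Hji] /eqP EQ.
    have [H1 H2 H3] := dec_bwd HK jK HF jR.
    case: EQ => ET EP; rewrite EP in H2 H3; rewrite ET in H1.
    by rewrite H1 H2 -H3 Hji.
  case/andP=> /andP[sTE Hdt] /andP[HP Hex].
  have [H1 H2 H3 H4 H5] := dec_fwd HK jK sTE Hdt HP.
  by rewrite H1 H2 H4 H3 H5 Hex eqxx.
case/andP=> /and3P[HF jR Hji] /eqP EQ.
have [/andP[_ /and4P[sTK _ _ _]] /andP[/andP[sPE _] _] _] := dec_bwd HK jK HF jR.
case: EQ => ET EP; rewrite ET in sTK; rewrite EP in sPE.
exact: wtU.
Qed.

Lemma K_nonempty : exists k, k \in K.
Proof. case/andP: HK => /existsP[v /eqP ->] _; exists v; by rewrite scompE reach_refl. Qed.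

Lemma sigma_K : sigma_max E w = \sum_(j in K) N j j.
Proof.
rewrite /sigma_max (@sum_part _ _ _ _ (mem K) (fun F k => max_out_forest E F && in_tree_rooted F k k)) //.
  move=> F HF; have OF : out_forest E F by case/andP: HF.
  case/OF_char: (OF) => sFE IF AF.
  case: K_nonempty => k kK.
  case: (root_exists AF k) => r Hr Hrk; have rK := KB HK kK (reach_sub sFE Hrk).
  exists r => j /=; rewrite HF (itr_char _ _ OF) reach_refl andbT /=.
  apply/idP/eqP => [/andP[jK Hj]|->]; last by rewrite rK Hr.
  have [_ GF] := (MOF_char _ _).1 HF.
  exact: esym (root_reach Hj (GF r Hr j (K_reach HK jK rK))).
by move=> F k _ /andP[].
Qed.

Lemma epsT_K : epsT E w K = \sum_(j in K) epsTj E w K j.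
Proof.
rewrite /epsT (@sum_part _ _ _ _ (mem K) (fun T k => (T \subset E) && diverging_tree K T k)) //.
  move=> T /andP[sTE /existsP[r Hr]]; exists r => j /=.
  rewrite sTE /=; apply/idP/eqP => [/andP[jK Hj]|->]; last by rewrite Hr andbT; case/and4P: Hr.
  have [_ H1 _] := tree_props Hj; have [_ H2 _] := tree_props Hr.
  case: (eqVneq j r) => [//|njr]; exfalso; have : j \in K :\ r by rewrite in_setD1 njr jK.
  by rewrite -H2 H1 in_setD1 eqxx.
move=> T k kK /andP[-> H] /=; by apply/existsP; exists k.
Qed.

Lemma epsP_full i : (i \in K) || (i \in Kplus E K) ->
  epsP E w K i = sigma_max E' w.
Proof.
move=> Hi; apply: eq_bigl => P; case: (boolP (max_out_forest E' P)) => //= HP.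
case/MOF_char: (HP) => /OF_char[sPE IP AP] GP.
case/orP: Hi => [iK|Hi]; first by apply/exists_inP; exists i => //; exact: reach_refl.
case: (root_exists AP i) => r Hr Hri.
case: (boolP (r \in K)) => rK; first by apply/exists_inP; exists r.
have Ph : forall a, a \in P -> a.2 \notin K by move=> a Ha; apply: (E'head HK); exact: subsetP sPE a Ha.
have sPE0 : P \subset E := subset_trans sPE (E'sub E K).
have Sr : srcb E r.
  apply/srcP => u Hu; case: (split_reach rK Hu) => [H|[k kK Hk]].
    exact: reach_sub sPE0 (GP r Hr u H).
  have := reachK_into Ph kK (GP r Hr k Hk) => erk; by rewrite erk kK in rK.
move: Hi; rewrite inE => /andP[_ /forallP /(_ (scomp E r))].
rewrite src_basis //= => /implyP H.
have : scomp E r != K by apply/eqP => EK; move: rK; rewrite -EK scompE reach_refl.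
move/H => /forall_inP /(_ r); rewrite scompE reach_refl => /(_ isT).
by rewrite (reach_sub sPE0 Hri).
Qed.

End Weights.

Theorem theorem2 (R : realFieldType) (n : nat) (E : {set 'I_n * 'I_n})
    (w : 'I_n -> 'I_n -> R)
    (Hloop : forall a, a \in E -> a.1 != a.2)
    (Hw : forall a, a \in E -> 0 < w a.1 a.2) :
  (* (1) row stochastic *)
  ((forall i j, 0 <= Jbar E w i j) /\ (forall i, \sum_(k < n) Jbar E w i k = 1)) /\
  (* (2) support *)
  (forall i j, Jbar E w i j != 0 <-> (j \in Ktilde E /\ reach E j i)) /\
  (forall K : {set 'I_n}, basis_bicomp E K ->
    (* (3) *)
    (forall j, j \in K ->
       (forall i, Jbar E w i j
                  = epsTj E w K j * epsP E w K i / sigma_max E w) /\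
       (forall i, i \in Kplus E K ->
          Jbar E w i j = Jbar E w j j /\ Jbar E w j j = epsTj E w K j / epsT E w K)) /\
    (* (4) *)
    \sum_(j in K) Jbar E w j j = 1 /\
    (* (5) *)
    (forall j1 j2, j1 \in K -> j2 \in K ->
       forall i, Jbar E w i j2 = epsTj E w K j2 / epsTj E w K j1 * Jbar E w i j1)) /\
  (* (4), undominated vertices *)
  (forall j, undominated E j -> Jbar E w j j = 1).
Proof.
have Hsig : 0 < sigma_max E w := sigma_pos Hw (subxx E).
have Hsig0 : sigma_max E w != 0 by rewrite gt_eqF.
have NG0 : forall i j, 0 <= N E w i j by move=> i j; exact: N_ge0.
have Npos : forall i j, j \in Ktilde E -> reach E j i -> 0 < N E w i j.
  move=> i j jKt Hji; have Sj := Ktilde_src jKt.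
  case: (G_exists Sj) => G [OG GG jR HG].
  have HGm : max_out_forest E G := (MOF_char E G).2 (conj OG GG).
  rewrite NE; apply: (@sum_gt0 _ _ _ _ G).
    move=> F /andP[/andP[/andP[sFE _] _] _]; exact: (@wt_pos _ _ E w Hw F sFE).
  by rewrite HGm jR HG.
have Psum : forall K, basis_bicomp E K -> \sum_(j in K) Jbar E w j j = 1.
  move=> K HK; rewrite (eq_bigr (fun j => N E w j j / sigma_max E w)) //.
  by rewrite -mulr_suml -sigma_K // divff.
split; [split|split; [|split]].
- by move=> i j; rewrite JbarE; apply: divr_ge0 => //; exact: ltW.
- move=> i; rewrite (eq_bigr (fun k => N E w i k / sigma_max E w)) //.
  by rewrite -mulr_suml rowsum divff.
- move=> i j; split.
    rewrite JbarE => H.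
    have : N E w i j != 0 by apply: contraNneq H => ->; rewrite mul0r.
    rewrite NE; case: (pickP (fun F => [&& max_out_forest E F, j \in roots F & reach F j i])).
      move=> F /and3P[HF jR Hji] _; split.
        apply: src_Ktilde; exact: root_src HF jR.
      by case/andP: HF => /andP[sFE _] _; exact: reach_sub sFE Hji.
    by move=> Hn; rewrite big_pred0 ?eqxx.
  case=> jKt Hji; rewrite JbarE gt_eqF //; apply: divr_gt0 => //; exact: Npos.
- move=> K HK.
  have Hsig' : 0 < sigma_max (minusK E K) w := sigma_pos Hw (E'sub E K).
  have Hsig'0 : sigma_max (minusK E K) w != 0 by rewrite gt_eqF.
  have dec : forall j i, j \in K -> Jbar E w i j = epsTj E w K j * epsP E w K i / sigma_max E w.
    by move=> j i jK; rewrite JbarE (decomp w HK i jK).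
  have Hjj : forall j, j \in K -> Jbar E w j j = epsTj E w K j * sigma_max (minusK E K) w / sigma_max E w.
    by move=> j jK; rewrite dec // epsP_full // jK.
  have epsTj0 : forall j, j \in K -> epsTj E w K j != 0.
    move=> j jK; apply/negP => /eqP H0.
    have := Npos j j (src_Ktilde (K_src HK jK)) (reach_refl _ _).
    by rewrite (decomp w HK j jK) H0 mul0r ltxx.
  split; [|split].
  + move=> j jK; split; first by move=> i; exact: dec.
    move=> i Hi; split; first by rewrite dec // Hjj // epsP_full // Hi orbT.
    rewrite Hjj // (sigma_K w HK).
    rewrite (eq_bigr (fun j => epsTj E w K j * sigma_max (minusK E K) w)); last first.
      move=> k kK; rewrite (decomp w HK k kK) epsP_full //; by rewrite kK.
    by rewrite -mulr_suml -epsT_K invfM mulrACA divff // mulr1.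
  + exact: Psum.
  + move=> j1 j2 j1K j2K i; rewrite !dec //.
    rewrite [in RHS]mulrA [in RHS](mulrA (_ / _)) divfK //; exact: epsTj0.
- move=> j Hu; have := Psum _ Hu; by rewrite big_set1.
Qed.
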